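(* Consider the following time-slotted remote tracking system. A source state $X_t$ evolves as a discrete-time Markov chain on $\{0,1,\dots,N\}$ ($N\in\mathbb{Z}_{>0}$) with transition probabilities $P_{i,k}=\Pr\{X_{t+1}=k\mid X_t=i\}$. A receiver holds an estimate $\hat X_t$. At each slot the transmitter chooses $\alpha_t\in\{0,1\}$ ($\alpha_t=1$: sample the source and transmit, incurring cost $c>0$). The channel realization $h_t\in\{0,1\}$ is i.i.d. with $\Pr(h_t=1)=p_s$; if $\alpha_t=1$ and $h_t=1$ the receiver updates $\hat X_{t+1}=X_t$, otherwise $\hat X_{t+1}=\hat X_t$. Given a nonnegative bounded actuation cost matrix $(C_{i,j})$, define, when $X_t=i$ and $\hat X_t=j$, $$g(t)=\begin{cases}\sum_{k=i}^{N} C_{k,j}P_{i,k}(1-p_s)+\sum_{k=i}^{N} C_{k,i}P_{i,k}\,p_s, & \alpha_t=1,\\[1mm] \sum_{k=i}^{N} C_{k,j}P_{i,k}, & \alpha_t=0.\end{cases}$$ Let $c_{\max}$ be a given bound and consider the problem of minimizing $\limsup_{T\to\infty}\frac1T\sum_{t=1}^T\mathbb{E}\{g(t)\}$ subject to $\bar c:=\lim_{T\to\infty}\frac1T\sum_{t=1}^T\mathbb{E}\{\alpha_t c\}\le c_{\max}$. The drift-plus-penalty (DPP) algorithm, with parameter $W>0$, maintains the virtual queue $Z(0)=0$, $Z(t+1)=\max[Z(t)-c_{\max},0]+\alpha_t c$, and at every slot $t$, observing $X_t$, $\hat X_t$ and $Z(t)$, chooses $\alpha_t\in\{0,1\}$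 minimizing $W g(t)+Z(t)(c\alpha_t-c_{\max})$. If the constrained problem is feasible, then the DPP algorithm satisfies the average cost constraint, i.e. $\limsup_{T\to\infty}\frac1T\sum_{t=1}^T\mathbb{E}\{\alpha_t c\}\le c_{\max}$.
   Context: $C_{i,j}$ is the cost of actuation error incurred when the source is in state $i$ while the receiver's estimate is $j$. A policy is a rule selecting $\alpha_t$ at each slot; the problem is feasible if some policy satisfies the average cost constraint. *)

(* Defs.v *)
From HB Require Import structures.
From mathcomp Require Import all_boot all_order all_algebra.
From mathcomp Require Import all_classical all_reals all_analysis.
Set Implicit Arguments. Unset Strict Implicit. Unset Printing Implicit Defensive.
Import Order.TTheory GRing.Theory Num.Theory.
Local Open Scope ring_scope.

(* Remote tracking system.  Source states are 'I_N.+1 = {0,...,N}.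
   A (past) slot record is (X_s, Xhat_s, alpha_s, h_s). A history at slot t is
   (past records for s < t, X_t, Xhat_t). *)
Section Tracking.
Variables (R : realType) (N : nat).
Notation S := 'I_N.+1.
Definition record := (S * S * bool * bool)%type.
Definition history := (seq record * S * S)%type.

Variables (P : S -> S -> R) (ps c : R) (C : S -> S -> R).

(* A general (randomized, history-dependent) policy: given the past records and
   the current (X_t, Xhat_t), the probability of choosing alpha_t = 1. *)
Definition policy := seq record -> S -> S -> R.

Definition is_policy (pol : policy) :=
  forall hs x xh, 0 <= pol hs x xh <= 1.

Definition bern (q : R) (b : bool) : R := if b then q else 1 - q.

Definition step_one (pol : policy) (e : R * history) : seq (R * history) :=
  let: (w, (hs, x, xh)) := e in
  flatten [seq flatten [seq
     [seq (w * bern (pol hs x xh) a * bern ps h * P x k,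
           (rcons hs (x, xh, a, h), k, if a && h then x else xh))
     | k <- enum S] | h <- [:: true; false]] | a <- [:: true; false]].

(* Law of the history at slot t: a finitely supported distribution given as a
   list of (probability, history) pairs, starting from initial law mu0 of
   (X_0, Xhat_0). *)
Fixpoint law (mu0 : S -> S -> R) (pol : policy) (t : nat) : seq (R * history) :=
  match t with
  | 0 => [seq (mu0 p.1 p.2, ([::], p.1, p.2)) | p <- enum {: S * S}]
  | t'.+1 => flatten [seq step_one pol e | e <- law mu0 pol t']
  end.

Definition exp_sampling_cost mu0 pol t : R :=
  \sum_(e <- law mu0 pol t) e.1 * (pol e.2.1.1 e.2.1.2 e.2.2 * c).

Definition avg_sampling_cost mu0 pol (T : nat) : R :=
  T%:R^-1 * \sum_(t < T) exp_sampling_cost mu0 pol t.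

Definition limsup_avg_cost mu0 pol : \bar R :=
  limn_esup (fun T => (avg_sampling_cost mu0 pol T)%:E).

Definition feasible mu0 (cmax : R) :=
  exists pol, is_policy pol /\ (limsup_avg_cost mu0 pol <= cmax%:E)%E.

Definition gcost (i j : S) (a : bool) : R :=
  if a then \sum_(k < N.+1 | (i <= k)%N) C k j * P i k * (1 - ps)
          + \sum_(k < N.+1 | (i <= k)%N) C k i * P i k * ps
  else \sum_(k < N.+1 | (i <= k)%N) C k j * P i k.

Definition Zqueue (cmax : R) (hs : seq record) : R :=
  foldl (fun z (r : record) => Num.max (z - cmax) 0 + (r.1.2 : bool)%:R * c) 0 hs.

Definition is_dpp_rule (W cmax : R) (dec : nat -> S -> S -> R -> bool) :=
  forall t x xh z (b : bool),
    W * gcost x xh (dec t x xh z) + z * (c * (dec t x xh z)%:R - cmax)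
      <= W * gcost x xh b + z * (c * b%:R - cmax).

Definition dpp_policy (cmax : R) (dec : nat -> S -> S -> R -> bool) : policy :=
  fun hs x xh => (dec (size hs) x xh (Zqueue cmax hs))%:R.

End Tracking.

(* Main.v *)
Require Import Defs.
From HB Require Import structures.
From mathcomp Require Import all_boot all_order all_algebra.
From mathcomp Require Import all_classical all_reals all_analysis.
From mathcomp Require Import ring lra.
Import Order.TTheory GRing.Theory Num.Theory.
Local Open Scope ring_scope.
Lemma step_sum (R : realType) (N : nat) (P : 'I_N.+1 -> 'I_N.+1 -> R) (ps : R)
  (pol : policy R N) (w : R) hs x xh (f : history N -> R) (G : bool -> R)
  (HP1 : \sum_(k < N.+1) P x k = 1)
  (Hf : forall a h k xh', f (rcons hs (x,xh,a,h), k, xh') = G a) :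
  \sum_(e <- step_one P ps pol (w,(hs,x,xh))) e.1 * f e.2 =
  w * (pol hs x xh * G true + (1 - pol hs x xh) * G false).
Proof.
have E : forall A a h xh', \sum_(e <- [seq (A * P x k, (rcons hs (x,xh,a,h), k, xh')) | k <- enum 'I_N.+1]) e.1 * f e.2 = A * G a.
  move=> A a h xh'; rewrite big_map; under eq_bigr do rewrite /= Hf.
  by rewrite -big_distrl -big_distrr /= big_enum /= HP1 mulr1.
rewrite /step_one /= !big_cat !big_nil !E /=; ring.
Qed.

Lemma step_mem (R : realType) (N : nat) (P : 'I_N.+1 -> 'I_N.+1 -> R) (ps : R)
  (pol : policy R N) (w : R) hs x xh e' :
  e' \in step_one P ps pol (w,(hs,x,xh)) ->
  exists a h k, e' = (w * bern (pol hs x xh) a * bern ps h * P x k,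
           (rcons hs (x, xh, a, h), k, if a && h then x else xh)).
Proof.
rewrite /step_one => /flatten_mapP [a _ /flatten_mapP [h _ /mapP [k _ ->]]].
by exists a, h, k.
Qed.

Lemma law_mem (R : realType) (N : nat) (P : 'I_N.+1 -> 'I_N.+1 -> R) (ps : R)
  mu0 (pol : policy R N) t e' :
  e' \in law P ps mu0 pol t.+1 ->
  exists2 e, e \in law P ps mu0 pol t & e' \in step_one P ps pol e.
Proof. by move=> /flatten_mapP. Qed.

Lemma law_step (R : realType) (N : nat) (P : 'I_N.+1 -> 'I_N.+1 -> R) (ps : R)
  mu0 (pol : policy R N) t (f : history N -> R) :
  \sum_(e <- law P ps mu0 pol t.+1) e.1 * f e.2 =
  \sum_(e <- law P ps mu0 pol t) \sum_(e' <- step_one P ps pol e) e'.1 * f e'.2.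
Proof.
by rewrite [law _ _ _ _ t.+1]/= big_flatten /= big_map.
Qed.

Lemma law_nonneg (R : realType) (N : nat) (P : 'I_N.+1 -> 'I_N.+1 -> R) (ps : R)
  mu0 (pol : policy R N) (HP0 : forall i k, 0 <= P i k) (Hps : 0 <= ps <= 1)
  (Hmu0 : forall x xh, 0 <= mu0 x xh) (Hpol : is_policy pol) t e :
  e \in law P ps mu0 pol t -> 0 <= e.1.
Proof.
have bern_ge0 q b : 0 <= q <= 1 -> 0 <= bern q b.
  by case: b => /andP[? ?] /=; lra.
elim: t e => [|t IH] e.
  by move=> /mapP [p _ ->] /=.
move=> /law_mem [[w [[hs x] xh]] /IH /= w0 /step_mem [a [h [k ->]]]] /=.
by rewrite !mulr_ge0 // bern_ge0.
Qed.

Lemma law_mass (R : realType) (N : nat) (P : 'I_N.+1 -> 'I_N.+1 -> R) (ps : R)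
  mu0 (pol : policy R N) (HP1 : forall i, \sum_(k < N.+1) P i k = 1)
  (Hmu1 : \sum_(x < N.+1) \sum_(xh < N.+1) mu0 x xh = 1) t :
  \sum_(e <- law P ps mu0 pol t) e.1 * 1 = 1.
Proof.
elim: t => [|t IH].
  rewrite /= big_map big_enum /=.
  under eq_bigr do rewrite mulr1.
  by rewrite -Hmu1 pair_bigA.
rewrite (@law_step _ _ P ps mu0 pol t (fun _ => 1)) -[RHS]IH; apply: eq_bigr => -[w [[hs x] xh]] _.
rewrite (@step_sum _ _ P ps pol w hs x xh (fun _ => 1) (fun _ => 1)) //=; ring.
Qed.

Lemma Zq_rcons (R : realType) (N : nat) (c cmax : R) hs (r : record N) :
  Zqueue c cmax (rcons hs r) = Num.max (Zqueue c cmax hs - cmax) 0 + (r.1.2 : bool)%:R * c.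
Proof. by rewrite /Zqueue foldl_rcons. Qed.

Lemma Zq_ge0 (R : realType) (N : nat) (c cmax : R) (Hc : 0 <= c) (hs : seq (record N)) :
  0 <= Zqueue c cmax hs.
Proof.
case/lastP: hs => [|hs r]; first by rewrite /Zqueue.
rewrite Zq_rcons addr_ge0 // ?le_max ?lexx ?orbT // mulr_ge0 //.
Qed.

Lemma law_Z (R : realType) (N : nat) (P : 'I_N.+1 -> 'I_N.+1 -> R) (ps c cmax : R)
  mu0 (pol : policy R N) (HP1 : forall i, \sum_(k < N.+1) P i k = 1) t :
  \sum_(e <- law P ps mu0 pol t.+1) e.1 * Zqueue c cmax e.2.1.1 =
  \sum_(e <- law P ps mu0 pol t) e.1 * (Num.max (Zqueue c cmax e.2.1.1 - cmax) 0
       + pol e.2.1.1 e.2.1.2 e.2.2 * c).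
Proof.
rewrite (@law_step _ _ P ps mu0 pol t (fun e => Zqueue c cmax e.1.1)).
apply: eq_bigr => -[w [[hs x] xh]] _.
rewrite (@step_sum _ _ P ps pol w hs x xh (fun e => Zqueue c cmax e.1.1)
   (fun a => Num.max (Zqueue c cmax hs - cmax) 0 + (a : bool)%:R * c)) //=.
  ring.
by move=> a h k xh'; rewrite /= Zq_rcons.
Qed.

Lemma dpp_inv (R : realType) (N : nat) (P : 'I_N.+1 -> 'I_N.+1 -> R) (ps c : R)
  (C : 'I_N.+1 -> 'I_N.+1 -> R) mu0 (cmax W B : R) (Hc : 0 < c) (HW : 0 < W)
  (Hcmax : 0 <= cmax) (HB : 0 <= B)
  (HgB : forall i j, gcost P ps C i j false - gcost P ps C i j true <= B)
  (dec : nat -> 'I_N.+1 -> 'I_N.+1 -> R -> bool)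
  (Hdec : is_dpp_rule P ps c C W cmax dec) t e :
  e \in law P ps mu0 (dpp_policy c cmax dec) t ->
  e.1 = 0 \/ Zqueue c cmax e.2.1.1 <= W * B / c + c.
Proof.
have Zb0 : 0 <= W * B / c by rewrite divr_ge0 // ?mulr_ge0 // ltW.
have dtrue : forall t x xh z, dec t x xh z = true -> z <= W * B / c.
  move=> t' x xh z Hd; have H := Hdec t' x xh z false; rewrite Hd in H.
  have := HgB x xh; rewrite ler_pdivlMr //.
  move: H; set g1 := gcost _ _ _ _ _ true; set g0 := gcost _ _ _ _ _ false => H HB'.
  have : W * (g0 - g1) <= W * B by rewrite ler_wpM2l // ltW.
  rewrite mulr1 mulr0 in H; nra.
elim: t e => [|t IH] e.
  move=> /mapP [p _ ->] /=; right; rewrite /Zqueue /=.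
  by rewrite addr_ge0 // ltW.
move=> /law_mem [[w [[hs x] xh]] /IH /= Hw /step_mem [a [h [k ->]]]] /=.
case: Hw => [->|HZ]; first by left; rewrite !mul0r.
rewrite Zq_rcons /= /dpp_policy.
have Z0 := @Zq_ge0 R N c cmax (ltW Hc) hs.
case Hd : (dec (size hs) x xh (Zqueue c cmax hs)); case: a => /=.
- right; have := dtrue _ _ _ _ Hd => HZ'.
  rewrite mul1r lerD2r ge_max Zb0 andbT; lra.
- by left; rewrite subrr mulr0 !mul0r.
- by left; rewrite mulr0 !mul0r.
- right; rewrite mul0r addr0 ge_max; apply/andP; split.
    lra.
  by rewrite addr_ge0 // ltW.
Qed.

Lemma telescope (R : realType) (N : nat) (P : 'I_N.+1 -> 'I_N.+1 -> R) (ps c cmax : R)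
  mu0 (pol : policy R N) (HP0 : forall i k, 0 <= P i k) (Hps : 0 <= ps <= 1)
  (HP1 : forall i, \sum_(k < N.+1) P i k = 1)
  (Hmu0 : forall x xh, 0 <= mu0 x xh) 
  (Hmu1 : \sum_(x < N.+1) \sum_(xh < N.+1) mu0 x xh = 1)
  (Hpol : is_policy pol) T :
  \sum_(t < T) exp_sampling_cost P ps c mu0 pol t <=
  \sum_(e <- law P ps mu0 pol T) e.1 * Zqueue c cmax e.2.1.1 + T%:R * cmax.
Proof.
elim: T => [|T IH].
  rewrite big_ord0 /= big_map big1 ?mul0r ?addr0 // => p _.
  by rewrite /Zqueue /= mulr0.
rewrite big_ord_recr /= law_Z //.
under [X in _ <= X + _]eq_bigr do rewrite mulrDr.
rewrite big_split /=.
set a := exp_sampling_cost _ _ _ _ _ _.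
have -> : \sum_(i <- law P ps mu0 pol T) i.1 * (pol i.2.1.1 i.2.1.2 i.2.2 * c) = a by [].
have H1 : \sum_(i <- law P ps mu0 pol T) i.1 * (Zqueue c cmax i.2.1.1 - cmax) <=
          \sum_(i <- law P ps mu0 pol T) i.1 * Num.max (Zqueue c cmax i.2.1.1 - cmax) 0.
  rewrite big_seq_cond [X in _ <= X]big_seq_cond; apply: ler_sum => e /andP[He _].
  by rewrite ler_wpM2l ?le_max ?lexx // (@law_nonneg R N P ps mu0 pol HP0 Hps Hmu0 Hpol T e He).
have H2 : \sum_(i <- law P ps mu0 pol T) i.1 * (Zqueue c cmax i.2.1.1 - cmax) =
   \sum_(e <- law P ps mu0 pol T) e.1 * Zqueue c cmax e.2.1.1 - cmax *
   \sum_(e <- law P ps mu0 pol T) e.1 * 1.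
  rewrite big_distrr -sumrB; apply: eq_bigr => e _ /=; ring.
rewrite law_mass // mulr1 in H2.
rewrite -natr1; lra.
Qed.

Lemma le_sum2 (R : realType) n (F : 'I_n -> 'I_n -> R) i j :
  (forall i j, 0 <= F i j) -> F i j <= \sum_(i0 < n) \sum_(j0 < n) F i0 j0.
Proof.
move=> F0; rewrite (bigD1 i) //= (bigD1 j) //= -addrA lerDl addr_ge0 ?sumr_ge0 //.
by move=> k _; rewrite sumr_ge0.
Qed.

Theorem theorem2 (R : realType) (N : nat) (HN : (0 < N)%N)
  (P : 'I_N.+1 -> 'I_N.+1 -> R)
  (HP0 : forall i k, 0 <= P i k)
  (HP1 : forall i, \sum_(k < N.+1) P i k = 1)
  (ps : R) (Hps : 0 <= ps <= 1)
  (c : R) (Hc : 0 < c)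
  (C : 'I_N.+1 -> 'I_N.+1 -> R) (HC : forall i j, 0 <= C i j)
  (mu0 : 'I_N.+1 -> 'I_N.+1 -> R) (Hmu0 : forall x xh, 0 <= mu0 x xh)
  (Hmu1 : \sum_(x < N.+1) \sum_(xh < N.+1) mu0 x xh = 1)
  (cmax W : R) (HW : 0 < W)
  (dec : nat -> 'I_N.+1 -> 'I_N.+1 -> R -> bool)
  (Hdec : is_dpp_rule P ps c C W cmax dec) :
  feasible P ps c mu0 cmax ->
  (limsup_avg_cost P ps c mu0 (dpp_policy c cmax dec) <= cmax%:E)%E.
Proof.
move=> [pol0 [Hpol0 Hle0]].
have Hcmax : 0 <= cmax.
  rewrite -lee_fin; apply: le_trans Hle0.
  rewrite /limsup_avg_cost limn_esup_lim; apply: lime_ge; first exact: is_cvg_esups.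
  apply: nearW => n /=.
  apply: (@le_trans _ _ (avg_sampling_cost P ps c mu0 pol0 n)%:E); last first.
    by apply: ereal_sup_ubound; exists n => /=.
  rewrite lee_fin /avg_sampling_cost mulr_ge0 // ?invr_ge0 // sumr_ge0 // => t _.
  rewrite /exp_sampling_cost big_seq sumr_ge0 // => e He.
  have := Hpol0 e.2.1.1 e.2.1.2 e.2.2 => /andP[? ?].
  rewrite mulr_ge0 // ?(@law_nonneg R N P ps mu0 pol0 HP0 Hps Hmu0 Hpol0 t e He) // mulr_ge0 // ltW //.
pose g i j b := gcost P ps C i j b.
pose B := \sum_(i < N.+1) \sum_(j < N.+1) `|g i j false - g i j true|.
have HB0 : 0 <= B by rewrite sumr_ge0 // => i _; rewrite sumr_ge0.
have HgB : forall i j, gcost P ps C i j false - gcost P ps C i j true <= B.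
  move=> i j; apply: (le_trans (ler_norm _)).
  exact: (@le_sum2 R N.+1 (fun i j => `|g i j false - g i j true|)).
pose Zb := W * B / c + c.
pose pol := dpp_policy c cmax dec.
have Hpol : is_policy pol by move=> hs x xh; rewrite /pol /dpp_policy; by case: (dec _ _ _ _); rewrite /= ?ler01 ?lexx.
have HEZ : forall T, \sum_(e <- law P ps mu0 pol T) e.1 * Zqueue c cmax e.2.1.1 <= Zb.
  move=> T; rewrite -[X in _ <= X]mulr1 -(@law_mass R N P ps mu0 pol HP1 Hmu1 T) big_distrr /=.
  rewrite big_seq [X in _ <= X]big_seq; apply: ler_sum => e He.
  have := @law_nonneg R N P ps mu0 pol HP0 Hps Hmu0 Hpol T e He => e0.
  case: (@dpp_inv R N P ps c C mu0 cmax W B Hc HW Hcmax HB0 HgB dec Hdec T e He) => [->|HZ].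
    by rewrite !mul0r mulr0.
  by rewrite mulr1 mulrC ler_wpM2r.
have Havg : forall T, (0 < T)%N -> avg_sampling_cost P ps c mu0 pol T <= cmax + Zb / T%:R.
  move=> T T0; rewrite /avg_sampling_cost.
  have := @telescope R N P ps c cmax mu0 pol HP0 Hps HP1 Hmu0 Hmu1 Hpol T.
  have := HEZ T => H1 H2.
  have HT : 0 < T%:R :> R by rewrite ltr0n.
  rewrite -ler_pdivlMl ?invr_gt0 // invrK mulrDr mulrCA mulfV ?gt_eqF // mulr1.
  lra.
have HZb : 0 <= Zb by rewrite addr_ge0 ?divr_ge0 ?mulr_ge0 // ltW.
apply/lee_addgt0Pr => eps eps0.
rewrite /limsup_avg_cost limn_esup_lim; apply: lime_le; first exact: is_cvg_esups.
pose n0 := (Num.trunc (Zb / eps)).+1.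
exists n0 => // n /= Hn.
apply: ge_ereal_sup => _ [k /= nk <-].
rewrite -EFinD lee_fin.
have Hk : (n0 <= k)%N by apply: leq_trans nk.
have k0 : (0 < k)%N by apply: leq_trans Hk.
apply: (le_trans (Havg k k0)); rewrite lerD2l.
have Hlt : Zb / eps < k%:R.
  apply: (lt_le_trans (truncnS_gt _)); by rewrite ler_nat.
rewrite ler_pdivrMr ?ltr0n //.
rewrite ltr_pdivrMr // in Hlt.
rewrite mulrC; exact: ltW.
Qed.
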